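(* Let $n\ge4$. There is no total single-sorted alter ego $\underset{\sim}{\mathbf C}_n$ for $\mathbf C_n$ that yields a strong duality on $\mathcal G_n$.
   Context: $\mathbf C_n$ is the Heyting algebra on the chain $\{0<1<\dots<n-1\}$, with min, max, $\bot=0$, $\top=n-1$, $a\to b=\top$ if $a\le b$, $a\to b=b$ if $b<a$. $\mathcal G_n$ is the class of algebras isomorphic to subalgebras of direct powers of $\mathbf C_n$ (the variety generated by $\mathbf C_n$). A (single-sorted) alter ego of $\mathbf C_n$ is a structure $\underset{\sim}{\mathbf C}_n=(C_n;G,H,R,\mathscr T)$ where $\mathscr T$ is the discrete topology, $G$ is a set of finitary total operations, $H$ a set of finitary partial operations and $R$ a set of finitary relations on $C_n$, each algebraic (the graph, resp. the relation, is a subalgebra of a finite power of $\mathbf C_n$); it is total if $H=\emptyset$. With $\mathcal X=\mathbb{IS}_c\mathbb P^+(\underset{\sim}{\mathbf C}_n)$ the class of structures isomorphic to closed substructures of (possibly empty) powers, and hom-functors $D=\mathcal G_n(-,\mathbf C_n)$, $E=\mathcal X(-,\underset{\sim}{\mathbf C}_n)$, the alter ego yields a duality if each evaluation $e_{\mathbf A}\colon\mathbf A\to ED(\mathbf A)$ is an isomorphism, a full duality if moreover each evaluation $\varepsilon_{\mathbf X}\colon\mathbf X\to DE(\mathbf X)$ is an isomorphism, and a strong duality if it yields a full duality and $\underset{\sim}{\mathbf C}_n$ is injective in $\mathcal X$ (with respect to embeddings). *)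

(* Defs.v *)
From HB Require Import structures.
From mathcomp Require Import all_boot.
From Stdlib Require Import FunctionalExtensionality PropExtensionality.
From Stdlib Require Lists.List.

Unset Implicit Arguments.

(* The chain C_n = {0 < 1 < ... < n-1}.  Carrier 'I_(n.-1).+1, which   *)
(* has exactly n elements for n >= 1 (the theorem assumes n >= 4).     *)
Definition Cc (n : nat) : Type := 'I_n.-1.+1.

Definition cmeet {n} (a b : Cc n) : Cc n := if (a <= b)%N then a else b.
Definition cjoin {n} (a b : Cc n) : Cc n := if (a <= b)%N then b else a.
Definition cimp  {n} (a b : Cc n) : Cc n := if (a <= b)%N then ord_max else b.
Definition cbot  {n} : Cc n := ord0.
Definition ctop  {n} : Cc n := ord_max.

Record HAlg := {
  hcar : Type;
  hmeet : hcar -> hcar -> hcar;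
  hjoin : hcar -> hcar -> hcar;
  himp : hcar -> hcar -> hcar;
  hbot : hcar;
  htop : hcar }.

Definition Calg (n : nat) : HAlg :=
  {| hcar := Cc n; hmeet := cmeet; hjoin := cjoin; himp := cimp;
     hbot := cbot; htop := ctop |}.

Definition powA (n : nat) (S : Type) : HAlg :=
  {| hcar := S -> Cc n;
     hmeet := fun f g s => cmeet (f s) (g s);
     hjoin := fun f g s => cjoin (f s) (g s);
     himp := fun f g s => cimp (f s) (g s);
     hbot := fun _ => cbot; htop := fun _ => ctop |}.

Definition hom (A B : HAlg) (f : hcar A -> hcar B) : Prop :=
  (forall x y, f (hmeet A x y) = hmeet B (f x) (f y)) /\
  (forall x y, f (hjoin A x y) = hjoin B (f x) (f y)) /\
  (forall x y, f (himp A x y) = himp B (f x) (f y)) /\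
  f (hbot A) = hbot B /\ f (htop A) = htop B.

Definition halg_iso (A B : HAlg) (f : hcar A -> hcar B) : Prop :=
  hom A B f /\ bijective f.

Definition subuniverse (A : HAlg) (P : hcar A -> Prop) : Prop :=
  P (hbot A) /\ P (htop A) /\
  (forall x y, P x -> P y ->
     P (hmeet A x y) /\ P (hjoin A x y) /\ P (himp A x y)).

(* A is in G_n = ISP(C_n): isomorphic to a subalgebra of a direct power,
   i.e. it embeds (injective homomorphism) into some power C_n^S *)
Definition inG (n : nat) (A : HAlg) : Prop :=
  exists (S : Type) (f : hcar A -> hcar (powA n S)),
    injective f /\ hom A (powA n S) f.

(* graph of a k-ary operation, as a subset of C_n^(k+1) (index option 'I_k,
   coordinate None = value) *)
Definition graph {n k} (g : ('I_k -> Cc n) -> Cc n) : (option 'I_k -> Cc n) -> Prop :=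
  fun t => t None = g (fun i => t (Some i)).

(* A total single-sorted alter ego (discrete topology implicit): a set G of
   finitary total operations and a set R of finitary relations, all algebraic. *)
Record AlterEgo (n : nat) := {
  aeG : forall k : nat, (('I_k -> Cc n) -> Cc n) -> Prop;
  aeR : forall k : nat, (('I_k -> Cc n) -> Prop) -> Prop;
  aeG_alg : forall k g, aeG k g -> subuniverse (powA n (option 'I_k)) (graph g);
  aeR_alg : forall k r, aeR k r -> subuniverse (powA n 'I_k) r }.
Arguments aeG {n} a k _.
Arguments aeR {n} a k _.

Record XStr (n : nat) (ae : AlterEgo n) := {
  xcar : Type;
  xopen : (xcar -> Prop) -> Prop;
  xop : forall k g, aeG ae k g -> ('I_k -> xcar) -> xcar;
  xrel : forall k r, aeR ae k r -> ('I_k -> xcar) -> Prop;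
  xopen_union : forall P : (xcar -> Prop) -> Prop,
      (forall V, P V -> xopen V) -> xopen (fun x => exists V, P V /\ V x);
  xopen_inter : forall U V, xopen U -> xopen V -> xopen (fun x => U x /\ V x);
  xopen_full : xopen (fun _ => True) }.
Arguments xcar {n ae} x.
Arguments xopen {n ae} x _.
Arguments xop {n ae} x {k g} _ _.
Arguments xrel {n ae} x {k r} _ _.

Definition CX {n} (ae : AlterEgo n) : XStr n ae.
Proof.
refine {| xcar := Cc n; xopen := fun _ => True;
          xop := fun k g _ t => g t; xrel := fun k r _ t => r t |}; by [].
Defined.

Definition xmorph {n} {ae : AlterEgo n} (X Y : XStr n ae)
    (h : xcar X -> xcar Y) : Prop :=
  (forall V, xopen Y V -> xopen X (fun x => V (h x))) /\
  (forall k g (Hg : aeG ae k g) (t : 'I_k -> xcar X),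
      h (xop X Hg t) = xop Y Hg (fun i => h (t i))) /\
  (forall k r (Hr : aeR ae k r) (t : 'I_k -> xcar X),
      xrel X Hr t -> xrel Y Hr (fun i => h (t i))).

Definition xiso {n} {ae : AlterEgo n} (X Y : XStr n ae)
    (h : xcar X -> xcar Y) : Prop :=
  xmorph X Y h /\
  exists h' : xcar Y -> xcar X, cancel h h' /\ cancel h' h /\ xmorph Y X h'.

(* embeddings: morphisms that are isomorphisms onto a closed substructure *)
Definition xembedding {n} {ae : AlterEgo n} (X Y : XStr n ae)
    (h : xcar X -> xcar Y) : Prop :=
  xmorph X Y h /\ injective h /\
  (forall k r (Hr : aeR ae k r) (t : 'I_k -> xcar X),
      xrel Y Hr (fun i => h (t i)) -> xrel X Hr t) /\
  (forall V, xopen X V -> exists U, xopen Y U /\ forall x, V x <-> U (h x)) /\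
  xopen Y (fun y => ~ exists x, h x = y).

(* product topology on C_n^S (C_n discrete) *)
Definition prod_open {n} (S : Type) (U : (S -> Cc n) -> Prop) : Prop :=
  forall f, U f -> exists F : list S,
    forall h, (forall s, List.In s F -> h s = f s) -> U h.

Definition opclosed {n} (ae : AlterEgo n) (S : Type) (Y : (S -> Cc n) -> Prop) :=
  forall k g (Hg : aeG ae k g) (t : 'I_k -> S -> Cc n),
    (forall i, Y (t i)) -> Y (fun s => g (fun i => t i s)).

Lemma sub_union {n} (S : Type) (Y : (S -> Cc n) -> Prop)
  (P : ({f | Y f} -> Prop) -> Prop) :
  (forall V, P V -> forall y, V y -> exists F : list S, forall y',
      (forall s, List.In s F -> proj1_sig y' s = proj1_sig y s) -> V y') ->
  forall y, (exists V, P V /\ V y) -> exists F : list S, forall y',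
      (forall s, List.In s F -> proj1_sig y' s = proj1_sig y s) ->
      (exists V, P V /\ V y').
Proof.
move=> HP y [V [PV Vy]]; have [F HF] := HP V PV y Vy.
by exists F => y' Hy'; exists V; split => //; apply: HF.
Qed.

Lemma sub_inter {n} (S : Type) (Y : (S -> Cc n) -> Prop) (U V : {f | Y f} -> Prop) :
  (forall y, U y -> exists F : list S, forall y',
      (forall s, List.In s F -> proj1_sig y' s = proj1_sig y s) -> U y') ->
  (forall y, V y -> exists F : list S, forall y',
      (forall s, List.In s F -> proj1_sig y' s = proj1_sig y s) -> V y') ->
  forall y, U y /\ V y -> exists F : list S, forall y',
      (forall s, List.In s F -> proj1_sig y' s = proj1_sig y s) -> U y' /\ V y'.
Proof.
move=> HU HV y [Uy Vy]; have [F1 H1] := HU y Uy; have [F2 H2] := HV y Vy.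
exists (F1 ++ F2)%list => y' Hy'; split.
- by apply: H1 => s Hs; apply: Hy'; apply: List.in_or_app; left.
- by apply: H2 => s Hs; apply: Hy'; apply: List.in_or_app; right.
Qed.

Definition subStr {n} (ae : AlterEgo n) (S : Type) (Y : (S -> Cc n) -> Prop)
  (HY : opclosed ae S Y) : XStr n ae.
Proof.
refine {| xcar := {f : S -> Cc n | Y f};
          xopen := fun V => forall y, V y -> exists F : list S, forall y',
              (forall s, List.In s F -> proj1_sig y' s = proj1_sig y s) -> V y';
          xop := fun k g Hg t =>
            exist _ (fun s => g (fun i => proj1_sig (t i) s))
                  (HY k g Hg (fun i => proj1_sig (t i)) (fun i => proj2_sig (t i)));
          xrel := fun k r Hr t => forall s, r (fun i => proj1_sig (t i) s) |}.
- exact: sub_union.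
- exact: sub_inter.
- by move=> y _; exists nil.
Defined.

(* X = IS_c P^+(C~): structures isomorphic to a closed substructure of a
   (possibly empty) power of C~ *)
Definition InX {n} (ae : AlterEgo n) (X : XStr n ae) : Prop :=
  exists (S : Type) (Y : (S -> Cc n) -> Prop) (HY : opclosed ae S Y),
    prod_open S (fun f => ~ Y f) /\ exists h, xiso X (subStr ae S Y HY) h.

Lemma G_comm {n} (ae : AlterEgo n) k g (Hg : aeG ae k g) :
  (forall u v, g (fun i => cmeet (u i) (v i)) = cmeet (g u) (g v)) /\
  (forall u v, g (fun i => cjoin (u i) (v i)) = cjoin (g u) (g v)) /\
  (forall u v, g (fun i => cimp (u i) (v i)) = cimp (g u) (g v)) /\
  g (fun _ => cbot) = cbot /\ g (fun _ => ctop) = ctop.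
Proof.
have [Hb [Ht Hc]] := aeG_alg n ae k g Hg.
pose tup (u : 'I_k -> Cc n) : option 'I_k -> Cc n :=
  fun o => match o with None => g u | Some i => u i end.
have Gt : forall u, graph g (tup u) by [].
split; [|split; [|split; [|split]]].
- by move=> u v; have [H _] := Hc _ _ (Gt u) (Gt v); rewrite /graph /= in H.
- by move=> u v; have [_ [H _]] := Hc _ _ (Gt u) (Gt v); rewrite /graph /= in H.
- by move=> u v; have [_ [_ H]] := Hc _ _ (Gt u) (Gt v); rewrite /graph /= in H.
- by rewrite /graph /= in Hb.
- by rewrite /graph /= in Ht.
Qed.

Lemma R_clos {n} (ae : AlterEgo n) k r (Hr : aeR ae k r) :
  (forall u v, r u -> r v -> r (fun i => cmeet (u i) (v i))) /\
  (forall u v, r u -> r v -> r (fun i => cjoin (u i) (v i))) /\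
  (forall u v, r u -> r v -> r (fun i => cimp (u i) (v i))) /\
  r (fun _ => cbot) /\ r (fun _ => ctop).
Proof.
have [Hb [Ht Hc]] := aeR_alg n ae k r Hr.
split; [|split; [|split; [|split]]] => //.
- by move=> u v ru rv; have [H _] := Hc u v ru rv.
- by move=> u v ru rv; have [_ [H _]] := Hc u v ru rv.
- by move=> u v ru rv; have [_ [_ H]] := Hc u v ru rv.
Qed.

Definition homset (n : nat) (A : HAlg) : (hcar A -> Cc n) -> Prop :=
  fun x => hom A (Calg n) x.

Lemma homset_opclosed {n} (ae : AlterEgo n) (A : HAlg) :
  opclosed ae (hcar A) (homset n A).
Proof.
move=> k g Hg t Ht.
have [Gm [Gj [Gi [Gb Gt]]]] := G_comm ae k g Hg.
split; [|split; [|split; [|split]]].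
- move=> x y /=.
  have -> : (fun i => t i (hmeet A x y)) = (fun i => cmeet (t i x) (t i y)).
    by apply: functional_extensionality => i; have [H _] := Ht i; exact: H.
  exact: Gm.
- move=> x y /=.
  have -> : (fun i => t i (hjoin A x y)) = (fun i => cjoin (t i x) (t i y)).
    by apply: functional_extensionality => i; have [_ [H _]] := Ht i; exact: H.
  exact: Gj.
- move=> x y /=.
  have -> : (fun i => t i (himp A x y)) = (fun i => cimp (t i x) (t i y)).
    by apply: functional_extensionality => i; have [_ [_ [H _]]] := Ht i; exact: H.
  exact: Gi.
- rewrite /=.
  have -> : (fun i => t i (hbot A)) = (fun _ => cbot).
    by apply: functional_extensionality => i; have [_ [_ [_ [H _]]]] := Ht i; exact: H.
  exact: Gb.
- rewrite /=.
  have -> : (fun i => t i (htop A)) = (fun _ => ctop).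
    by apply: functional_extensionality => i; have [_ [_ [_ [_ H]]]] := Ht i; exact: H.
  exact: Gt.
Qed.

(* D(A): the closed substructure G_n(A, C_n) of C~^A *)
Definition Dfun {n} (ae : AlterEgo n) (A : HAlg) : XStr n ae :=
  subStr ae (hcar A) (homset n A) (homset_opclosed ae A).

Lemma morph_bin {n} (ae : AlterEgo n) (X : XStr n ae) (o : Cc n -> Cc n -> Cc n)
  (Hg : forall k g, aeG ae k g -> forall u v,
      g (fun i => o (u i) (v i)) = o (g u) (g v))
  (Hr : forall k r, aeR ae k r -> forall u v, r u -> r v -> r (fun i => o (u i) (v i)))
  (a b : xcar X -> Cc n) :
  xmorph X (CX ae) a -> xmorph X (CX ae) b ->
  xmorph X (CX ae) (fun x => o (a x) (b x)).
Proof.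
move=> [ca [oa ra]] [cb [ob rb]]; split; [|split].
- move=> V _.
  pose P := fun W : xcar X -> Prop => exists p q, V (o p q) /\
              W = (fun x => a x = p /\ b x = q).
  have HP : forall W, P W -> xopen X W.
    move=> W [p [q [_ ->]]]; apply: xopen_inter.
    + exact: (ca (fun c => c = p)).
    + exact: (cb (fun c => c = q)).
  have E : (fun x => V (o (a x) (b x))) = (fun x => exists W, P W /\ W x).
    apply: functional_extensionality => x; apply: propositional_extensionality; split.
    + move=> Hv; exists (fun y => a y = a x /\ b y = b x); split => //.
      by exists (a x), (b x).
    + by move=> [W [[p [q [Hv ->]]] [-> ->]]].
  rewrite E; exact: xopen_union.
- move=> k g Hk t; rewrite (oa k g Hk t) (ob k g Hk t) /=.
  by rewrite (Hg k g Hk).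
- move=> k r Hk t Ht /=; apply: Hr => //; [exact: (ra k r Hk t Ht)|exact: (rb k r Hk t Ht)].
Qed.

Lemma morph_const {n} (ae : AlterEgo n) (X : XStr n ae) (c : Cc n)
  (Hg : forall k g, aeG ae k g -> g (fun _ => c) = c)
  (Hr : forall k r, aeR ae k r -> r (fun _ => c)) :
  xmorph X (CX ae) (fun _ => c).
Proof.
split; [|split].
- move=> V _.
  pose P := fun W : xcar X -> Prop => V c /\ W = (fun _ => True).
  have E : (fun _ : xcar X => V c) = (fun x => exists W, P W /\ W x).
    apply: functional_extensionality => x; apply: propositional_extensionality; split.
    + by move=> Hv; exists (fun _ => True).
    + by move=> [W [[Hv _] _]].
  rewrite E; apply: xopen_union => W [_ ->]; exact: xopen_full.
- by move=> k g Hk t /=; rewrite (Hg k g Hk).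
- by move=> k r Hk t _ /=; apply: Hr.
Qed.

Definition Eset {n} (ae : AlterEgo n) (X : XStr n ae) := {a : xcar X -> Cc n | xmorph X (CX ae) a}.

Definition Emeet {n} (ae : AlterEgo n) (X : XStr n ae) (a b : Eset ae X) : Eset ae X :=
  exist _ (fun x => cmeet (proj1_sig a x) (proj1_sig b x))
    (morph_bin ae X cmeet (fun k g H => proj1 (G_comm ae k g H))
       (fun k r H => proj1 (R_clos ae k r H)) _ _ (proj2_sig a) (proj2_sig b)).
Definition Ejoin {n} (ae : AlterEgo n) (X : XStr n ae) (a b : Eset ae X) : Eset ae X :=
  exist _ (fun x => cjoin (proj1_sig a x) (proj1_sig b x))
    (morph_bin ae X cjoin (fun k g H => proj1 (proj2 (G_comm ae k g H)))
       (fun k r H => proj1 (proj2 (R_clos ae k r H))) _ _ (proj2_sig a) (proj2_sig b)).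
Definition Eimp {n} (ae : AlterEgo n) (X : XStr n ae) (a b : Eset ae X) : Eset ae X :=
  exist _ (fun x => cimp (proj1_sig a x) (proj1_sig b x))
    (morph_bin ae X cimp (fun k g H => proj1 (proj2 (proj2 (G_comm ae k g H))))
       (fun k r H => proj1 (proj2 (proj2 (R_clos ae k r H)))) _ _ (proj2_sig a) (proj2_sig b)).
Definition Ebot {n} (ae : AlterEgo n) (X : XStr n ae) : Eset ae X :=
  exist _ (fun _ => cbot)
    (morph_const ae X cbot (fun k g H => proj1 (proj2 (proj2 (proj2 (G_comm ae k g H)))))
       (fun k r H => proj1 (proj2 (proj2 (proj2 (R_clos ae k r H)))))).
Definition Etop {n} (ae : AlterEgo n) (X : XStr n ae) : Eset ae X :=
  exist _ (fun _ => ctop)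
    (morph_const ae X ctop (fun k g H => proj2 (proj2 (proj2 (proj2 (G_comm ae k g H)))))
       (fun k r H => proj2 (proj2 (proj2 (proj2 (R_clos ae k r H)))))).

(* E(X): the subalgebra X(X, C~) of C_n^X *)
Definition Efun {n} (ae : AlterEgo n) (X : XStr n ae) : HAlg :=
  {| hcar := Eset ae X; hmeet := Emeet ae X; hjoin := Ejoin ae X;
     himp := Eimp ae X; hbot := Ebot ae X; htop := Etop ae X |}.

Lemma eval_morph {n} (ae : AlterEgo n) (A : HAlg) (a : hcar A) :
  xmorph (Dfun ae A) (CX ae) (fun x => proj1_sig x a).
Proof.
split; [|split].
- move=> V _ y Vy; exists (cons a nil) => y' Hy'.
  by rewrite (Hy' a (or_introl erefl)).
- by [].
- by move=> k r Hr t Ht; exact: (Ht a).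
Qed.

Definition evA {n} (ae : AlterEgo n) (A : HAlg) (a : hcar A) :
  hcar (Efun ae (Dfun ae A)) :=
  exist _ (fun x : xcar (Dfun ae A) => proj1_sig x a) (eval_morph ae A a).

Lemma eps_hom {n} (ae : AlterEgo n) (X : XStr n ae) (x : xcar X) :
  hom (Efun ae X) (Calg n) (fun a => proj1_sig a x).
Proof. by []. Qed.

Definition epsX {n} (ae : AlterEgo n) (X : XStr n ae) (x : xcar X) :
  xcar (Dfun ae (Efun ae X)) :=
  exist _ (fun a : hcar (Efun ae X) => proj1_sig a x) (eps_hom ae X x).

Definition yields_duality {n} (ae : AlterEgo n) : Prop :=
  forall A : HAlg, inG n A -> halg_iso A (Efun ae (Dfun ae A)) (evA ae A).

Definition yields_full_duality {n} (ae : AlterEgo n) : Prop :=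
  yields_duality ae /\
  forall X : XStr n ae, InX ae X -> xiso X (Dfun ae (Efun ae X)) (epsX ae X).

Definition CX_injective {n} (ae : AlterEgo n) : Prop :=
  forall (X Y : XStr n ae), InX ae X -> InX ae Y ->
  forall phi : xcar X -> xcar Y, xembedding X Y phi ->
  forall f : xcar X -> Cc n, xmorph X (CX ae) f ->
  exists g : xcar Y -> Cc n, xmorph Y (CX ae) g /\ forall x, g (phi x) = f x.

Definition yields_strong_duality {n} (ae : AlterEgo n) : Prop :=
  yields_full_duality ae /\ CX_injective ae.

(* Main.v *)
Require Import Defs.
From mathcomp Require Import all_boot zify.
From Stdlib Require Import FunctionalExtensionality PropExtensionality ProofIrrelevance IndefiniteDescription Lia.

Lemma sig_eqP {T} {P : T -> Prop} (a b : {x | P x}) : proj1_sig a = proj1_sig b -> a = b.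
Proof. case: a b => [x px] [y py] /= E; subst y; by rewrite (proof_irrelevance _ px py). Qed.

Definition l3 : list 'I_3 := [:: ord0; inord 1; inord 2].
Lemma l3_all (s : 'I_3) : List.In s l3.
Proof.
case: s => [[|[|[|m]]] Hm] /=.
- left; exact: val_inj.
- right; left; apply: ord_inj; by rewrite /= inordK.
- right; right; left; apply: ord_inj; by rewrite /= inordK.
- by move: Hm.
Qed.

Lemma all_open3 {n} (ae : AlterEgo n) (Yp : (Cc 3 -> Cc n) -> Prop) (HY : opclosed ae (Cc 3) Yp) (V : xcar (subStr ae (Cc 3) Yp HY) -> Prop) :
  xopen (subStr ae (Cc 3) Yp HY) V.
Proof.
rewrite /subStr /=.
move=> y Vy; exists l3 => y' Hy'.
have -> : y' = y; last by [].
apply: sig_eqP; apply: functional_extensionality => s; apply: Hy'; exact: l3_all.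
Qed.

Lemma prod_open3 {n} (U : (Cc 3 -> Cc n) -> Prop) : prod_open (Cc 3) U.
Proof. move=> f Uf; exists l3 => h Hh; have -> : h = f; [apply: functional_extensionality => s; apply: Hh; exact: l3_all | by []]. Qed.

Lemma xiso_id {n} {ae : AlterEgo n} (X : XStr n ae) : xiso X X id.
Proof. have M : xmorph X X id by split; [move=> V HV; exact HV| split=> //]. split => //; exists id; by split. Qed.

Lemma InX_sub3 {n} (ae : AlterEgo n) Yp HY : InX ae (subStr ae (Cc 3) Yp HY).
Proof. exists (Cc 3), Yp, HY; split; [exact: prod_open3 | exists id; exact: xiso_id]. Qed.

Lemma hom_of_mono {m n} (P : Cc m -> Prop) (f : Cc m -> Cc n)
  (Hle : forall c d, P c -> P d -> (c <= d)%N = (f c <= f d)%N)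
  (Hmax : f ord_max = ord_max) c d : P c -> P d ->
  f (cmeet c d) = cmeet (f c) (f d) /\ f (cjoin c d) = cjoin (f c) (f d) /\ f (cimp c d) = cimp (f c) (f d).
Proof. move=> Pc Pd; rewrite /cmeet /cjoin /cimp -(Hle c d Pc Pd); by case: ifP => _; rewrite ?Hmax. Qed.

Definition incl {n} (c : Cc 3) : Cc n := if nat_of_ord c == 0 then ord0 else if nat_of_ord c == 1 then inord 2 else ord_max.
Definition sg {n} (c : Cc n) : Cc n := if nat_of_ord c == 2 then inord 1 else c.
Definition P3 {n} (c : Cc n) : Prop := nat_of_ord c = 0 \/ nat_of_ord c = 2 \/ nat_of_ord c = n.-1.

Lemma val_incl {n} (hn : (4 <= n)%N) (c : Cc 3) :
  nat_of_ord (@incl n c) = if nat_of_ord c == 0 then 0 else if nat_of_ord c == 1 then 2 else n.-1.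
Proof.
rewrite /incl; case: ifP => // _; case: ifP => // _; rewrite inordK //; lia.
Qed.

Lemma incl_hom {n} (hn : (4 <= n)%N) : hom (Calg 3) (Calg n) incl.
Proof.
have Hle : forall (c : Cc 3) (d : Cc 3), True -> True -> (c <= d)%N = (@incl n c <= @incl n d)%N.
  move=> c d t1 t2; rewrite (val_incl hn c) (val_incl hn d).
  case: c => [[|[|[|?]]] Hc]; case: d => [[|[|[|?]]] Hd] //=; lia.
have Hmax : @incl n ord_max = ord_max by [].
split; [|split; [|split; [|split]]] => //= x y; by have := hom_of_mono _ _ Hle Hmax x y I I; case=> [? [? ?]].
Qed.

Lemma endo2 {n} (hn : (4 <= n)%N) (u : Cc n -> Cc n) : hom (Calg n) (Calg n) u ->
  (2 <= nat_of_ord (u (inord 2)))%N.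
Proof.
move=> [Hm [Hj [Hi [Hb Ht]]]].
have v1 : nat_of_ord (inord 1 : Cc n) = 1 by rewrite inordK //; lia.
have v2 : nat_of_ord (inord 2 : Cc n) = 2 by rewrite inordK //; lia.
set c1 : Cc n := inord 1; set c2 : Cc n := inord 2.
have H1 : (1 <= nat_of_ord (u c1))%N.
  have := Hi c1 cbot; rewrite /= /cimp.
  have -> : (c1 <= (cbot : Cc n))%N = false by rewrite v1.
  have Hb' : u cbot = cbot := Hb.
  rewrite Hb'; case: (leqP (u c1) (@cbot n)) => [Hle|//] Hc.
  move: (congr1 val Hc) => /=; lia.
have H2 : (nat_of_ord (u c1) <= nat_of_ord (u c2))%N.
  have := Hm c1 c2; rewrite /= /cmeet v1 v2 /=.
  case: ifP => // /negbT; rewrite -ltnNge => Hlt Ee; rewrite -Ee in Hlt; lia.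
have := Hi c2 c1; rewrite /= /cimp v1 v2 /=.
case: ifP => [_ E|]; last lia.
move: (congr1 val E) => /=; lia.
Qed.

Lemma val_sg {n} (c : Cc n) (hn : (4 <= n)%N) :
  nat_of_ord (sg c) = if nat_of_ord c == 2 then 1 else nat_of_ord c.
Proof. rewrite /sg; case: ifP => // _; rewrite inordK //; lia. Qed.

Lemma sg_ops {n} (hn : (4 <= n)%N) (c d : Cc n) : P3 c -> P3 d ->
  sg (cmeet c d) = cmeet (sg c) (sg d) /\ sg (cjoin c d) = cjoin (sg c) (sg d) /\ sg (cimp c d) = cimp (sg c) (sg d).
Proof.
apply: hom_of_mono.
- move=> x y Hx Hy; rewrite (val_sg x hn) (val_sg y hn).
  case: Hx => [Hx|[Hx|Hx]]; case: Hy => [Hy|[Hy|Hy]]; rewrite Hx Hy /=;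
  repeat case: eqP => //=; lia.
- apply: ord_inj; rewrite (val_sg _ hn) /=; case: eqP => //=; lia.
Qed.

Lemma hom_comp (A B C : HAlg) f g : hom A B f -> hom B C g -> hom A C (fun x => g (f x)).
Proof.
move=> [f1 [f2 [f3 [f4 f5]]]] [g1 [g2 [g3 [g4 g5]]]].
split; [|split; [|split; [|split]]] => *; by rewrite ?f1 ?f2 ?f3 ?f4 ?f5 ?g1 ?g2 ?g3 ?g4 ?g5.
Qed.

Lemma inG3 {n} (hn : (4 <= n)%N) : inG n (Calg 3).
Proof.
exists unit, (fun c _ => @incl n c); split.
- move=> x y E; have H := congr1 (fun f => nat_of_ord (f tt)) E; move: H => /=.
  rewrite (val_incl hn x) (val_incl hn y); clear E => H; apply: ord_inj; move: H.
  case: x => [[|[|[|?]]] ?]; case: y => [[|[|[|?]]] ?] //=; lia.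
- have [i1 [i2 [i3 [i4 i5]]]] := incl_hom hn.
  split; [|split;[|split;[|split]]] => *; apply: functional_extensionality => s /=.
  + exact: i1.
  + exact: i2.
  + exact: i3.
  + exact: i4.
  + exact: i5.
Qed.

Theorem corollary6p2 (n : nat) (hn : (4 <= n)%N) (ae : AlterEgo n) :
  ~ yields_strong_duality ae.
Proof.
move=> [[Hdual Hfull] Hinj].
pose XP := fun f : Cc 3 -> Cc n => homset n (Calg 3) f /\ exists u, homset n (Calg n) u /\ forall b, f b = u (@incl n b).
have HXP : opclosed ae (Cc 3) XP.
  move=> k g Hg t Ht; split.
    exact: (homset_opclosed ae (Calg 3) k g Hg t (fun i => proj1 (Ht i))).
  pose U := fun i => proj1_sig (constructive_indefinite_description _ (proj2 (Ht i))).
  have HU : forall i, homset n (Calg n) (U i) /\ forall b, t i b = U i (incl b) := fun i => proj2_sig (constructive_indefinite_description _ (proj2 (Ht i))).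
  exists (fun c => g (fun i => U i c)); split.
    exact: (homset_opclosed ae (Calg n) k g Hg U (fun i => proj1 (HU i))).
  move=> b; congr g; apply: functional_extensionality => i; exact: (proj2 (HU i) b).
pose X := subStr ae (Cc 3) XP HXP.
pose Y := Dfun ae (Calg 3).
pose phi : xcar X -> xcar Y := fun x => exist (homset n (Calg 3)) (proj1_sig x) (proj1 (proj2_sig x)).
have Hinjphi : injective phi.
  move=> x y E; apply: sig_eqP; exact: (congr1 (@proj1_sig _ _) E).
have Hemb : xembedding X Y phi.
  split; [split; [|split]|split; [|split; [|split]]].
  - move=> V _; exact: all_open3.
  - move=> k g Hg t; apply: sig_eqP; by [].
  - move=> k r Hr t; by [].
  - exact: Hinjphi.
  - move=> k r Hr t; by [].
  - move=> V _; exists (fun y => exists x, phi x = y /\ V x); split; first exact: all_open3.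
    move=> x; split; first by move=> Vx; exists x.
    by move=> [x' [/Hinjphi -> ]].
  - exact: all_open3.
have InXX : InX ae X := InX_sub3 ae XP HXP.
have InXY : InX ae Y := InX_sub3 ae _ (homset_opclosed ae (Calg 3)).
have x2P : XP (@incl n).
  split; first exact: incl_hom.
  exists id; split; last by [].
  by split; [|split; [|split; [|split]]].
pose x2 : xcar X := exist XP (@incl n) x2P.
have Key : forall a : Eset ae X, P3 (proj1_sig a x2).
  move=> [a Ha] /=.
  have [g [Hg Hgphi]] := Hinj X Y InXX InXY phi Hemb a Ha.
  have [_ [inv _ Hinv]] := Hdual (Calg 3) (inG3 hn).
  pose G : hcar (Efun ae Y) := exist _ g Hg.
  have := Hinv G.
  move=> /(congr1 (fun z => proj1_sig z (phi x2))) /=.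
  rewrite Hgphi => E; rewrite -E.
  rewrite /P3 (val_incl hn); case: ifP => _; first by left.
  by case: ifP => _; [right; left|right; right].
pose psi := fun a : Eset ae X => sg (proj1_sig a x2).
have Hpsi : homset n (Efun ae X) psi.
  split; [|split;[|split;[|split]]].
  - move=> a b; exact: (proj1 (sg_ops hn _ _ (Key a) (Key b))).
  - move=> a b; exact: (proj1 (proj2 (sg_ops hn _ _ (Key a) (Key b)))).
  - move=> a b; exact: (proj2 (proj2 (sg_ops hn _ _ (Key a) (Key b)))).
  - by rewrite /psi /sg /=.
  - rewrite /psi /=; apply: ord_inj; rewrite (val_sg _ hn) /=; case: eqP => //=; lia.
have [_ [h' [_ [Hc2 _]]]] := Hfull X InXX.
pose Psi : xcar (Dfun ae (Efun ae X)) := exist _ psi Hpsi.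
have He2 : xmorph X (CX ae) (fun x : xcar X => proj1_sig x (inord 1 : Cc 3)).
  split; [|split].
  - move=> V _; exact: all_open3.
  - by [].
  - move=> k r Hr t Ht; exact: (Ht (inord 1)).
pose E2 : Eset ae X := exist _ _ He2.
have := Hc2 Psi.
move=> /(congr1 (fun z => proj1_sig z E2)) /=.
case: (h' Psi) => [x [_ [u [Hu Hub]]]] /=.
rewrite Hub /psi /=.
have -> : @incl n (inord 1) = inord 2.
  apply: ord_inj; rewrite (val_incl hn) /= inordK // inordK //; lia.
move=> E; have := endo2 hn u Hu; rewrite E (val_sg _ hn) inordK /=; last lia.
by [].
Qed.
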